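(* Let $\kappa$, $E$ and $b$ be as in the context, and suppose $\delta(\kappa,b)(E)<1$. Let $g,h:(0,1)\to\mathbb{R}$ be non-decreasing functions with $g(r)\le h(r)$ for all $r\in(0,1)\setminus E$. Put $s(r)=1-b(r)(1-r)$. Then there exists $R\in[0,1)$ such that $g(r)\le h(s(r))$ for all $r\in[R,1)$.
   Context: $\kappa:(0,1)\to(0,1)$ is either the identity $\kappa(x)=x$ or a strictly increasing, continuous, convex function with $\lim_{x\to1^-}\frac{1-x}{\kappa(1-x)}=\infty$ satisfying the doubling-type property: for every $\delta:(0,1)\to(0,1)$ with $\delta(x)\to0$ as $x\to1^-$ and every $\gamma>0$ there is $\tau>0$ with $\lim_{x\to1^-}\frac{\kappa(1-x)}{\kappa((1-x)(\gamma-\delta(x)))}=\lim_{x\to1^-}\frac{\kappa(1-x)}{\kappa((1-x)(\gamma+\delta(x)))}=\tau$. $E\subset[0,1)$ is measurable with $\int_E\frac{dx}{\kappa(1-x)}<\infty$, and $b:(0,1)\to(0,1)$ is a function. The $\kappa$-density of $E$ relative to $b$ is $$\delta(\kappa,b)(E)=\limsup_{r\to1^-}\frac{\frac{\kappa(1-r)}{1-r}\int_{E\cap[r,1)}\frac{dx}{\kappa(1-x)}}{1-b(r)}.$$ *)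

(* Defs.v *)
From Stdlib Require Import Reals Lra.
Open Scope R_scope.

Definition lim_left1 (F : R -> R) (L : R) : Prop :=
  forall eps, 0 < eps -> exists eta, 0 < eta /\
    forall x, 1 - eta < x < 1 -> Rabs (F x - L) < eps.

Definition lim_left1_infty (F : R -> R) : Prop :=
  forall M, exists eta, 0 < eta /\ forall x, 1 - eta < x < 1 -> M < F x.

Definition kappa_doubling (kappa : R -> R) : Prop :=
  forall delta : R -> R,
    (forall x, 0 < x < 1 -> 0 < delta x < 1) ->
    lim_left1 delta 0 ->
    forall gamma, 0 < gamma -> exists tau, 0 < tau /\
      lim_left1 (fun x => kappa (1 - x) / kappa ((1 - x) * (gamma - delta x))) tau /\
      lim_left1 (fun x => kappa (1 - x) / kappa ((1 - x) * (gamma + delta x))) tau.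

Definition admissible_kappa (kappa : R -> R) : Prop :=
  (forall x, 0 < x < 1 -> 0 < kappa x < 1) /\
  ( (forall x, 0 < x < 1 -> kappa x = x)
    \/
    ( (forall x y, 0 < x < 1 -> 0 < y < 1 -> x < y -> kappa x < kappa y)
      /\ (forall x, 0 < x < 1 -> continuity_pt kappa x)
      /\ (forall x y t, 0 < x < 1 -> 0 < y < 1 -> 0 <= t <= 1 ->
            kappa (t * x + (1 - t) * y) <= t * kappa x + (1 - t) * kappa y)
      /\ lim_left1_infty (fun x => (1 - x) / kappa (1 - x))
      /\ kappa_doubling kappa ) ).

Definition len_cover_lt (A : R -> Prop) (eps : R) : Prop :=
  exists a b : nat -> R,
    (forall n, a n <= b n) /\
    (forall x, A x -> exists n, a n <= x <= b n) /\
    exists S, infinite_sum (fun n => b n - a n) S /\ S < eps.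

Definition open_set (U : R -> Prop) : Prop :=
  forall x, U x -> exists d, 0 < d /\ forall y, Rabs (y - x) < d -> U y.

(* Standard characterisation: E is Lebesgue measurable iff for every eps > 0
   there is an open U containing E with outer measure of U \ E below eps. *)
Definition lebesgue_measurable (E : R -> Prop) : Prop :=
  forall eps, 0 < eps -> exists U, open_set U /\ (forall x, E x -> U x) /\
    len_cover_lt (fun x => U x /\ ~ E x) eps.

Definition wfun (kappa : R -> R) : R -> R := fun x => / kappa (1 - x).

Definition wcover_sum (kappa : R -> R) (A : R -> Prop) (S : R) : Prop :=
  exists (a b : nat -> R) (pr : forall n, Riemann_integrable (wfun kappa) (a n) (b n)),
    (forall n, 0 < a n /\ a n <= b n /\ b n < 1) /\
    (forall x, A x -> 0 < x < 1 -> exists n, a n <= x <= b n) /\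
    infinite_sum (fun n => RiemannInt (pr n)) S.

(* wint kappa A m : the (finite) value of int_A dx/kappa(1-x) is m.
   For measurable A this infimum over interval covers is the Lebesgue integral. *)
Definition wint (kappa : R -> R) (A : R -> Prop) (m : R) : Prop :=
  (forall S, wcover_sum kappa A S -> m <= S) /\
  (forall eps, 0 < eps -> exists S, wcover_sum kappa A S /\ S < m + eps).

Definition wint_finite (kappa : R -> R) (A : R -> Prop) : Prop :=
  exists m, wint kappa A m.

(* The quantity whose limsup is the kappa-density. *)
Definition density_ratio (kappa b : R -> R) (m r : R) : R :=
  (kappa (1 - r) / (1 - r) * m) / (1 - b r).

(* delta(kappa,b)(E) < 1, i.e. limsup_{r->1^-} ratio(r) < 1 *)
Definition density_lt_1 (kappa b : R -> R) (E : R -> Prop) : Prop :=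
  exists c, c < 1 /\ exists R0, R0 < 1 /\
    forall r, 0 < r -> R0 <= r < 1 ->
      forall m, wint kappa (fun x => E x /\ r <= x) m ->
        density_ratio kappa b m r <= c.

(* Main.v *)
Require Import Defs.
From Stdlib Require Import Reals Lra Lia List Classical.
Open Scope R_scope.

Definition lsum (l : list (R*R)) : R :=
  fold_right (fun p acc => Rmax 0 (snd p - fst p) + acc) 0 l.

Lemma lsum_nonneg l : 0 <= lsum l.
Proof. induction l; simpl. lra. pose proof (Rmax_l 0 (snd a - fst a)); lra. Qed.

Lemma lsum_app l1 l2 : lsum (l1 ++ l2) = lsum l1 + lsum l2.
Proof. induction l1; simpl. lra. rewrite IHl1; lra. Qed.

Lemma finite_cover : forall n l, (length l <= n)%nat -> forall u v,
  (forall x, u <= x <= v -> exists p, In p l /\ fst p < x < snd p) -> v - u <= lsum l.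
Proof.
  induction n; intros l Hl u v Hc.
  - destruct (Rle_dec u v).
    + destruct (Hc v) as [p [Hp _]]; [lra|]. destruct l; simpl in *; [tauto| lia].
    + pose proof (lsum_nonneg l); lra.
  - destruct (Rle_dec u v) as [Huv|Huv]; [|pose proof (lsum_nonneg l); lra].
    destruct (Hc v) as [[c d] [Hp Hcd]]; [lra|]. simpl in Hcd.
    destruct (in_split _ _ Hp) as [l1 [l2 ->]].
    assert (H1 : c - u <= lsum (l1 ++ l2)).
    { apply IHn.
      - rewrite app_length in *; simpl in Hl; lia.
      - intros x Hx. destruct (Hc x) as [q [Hq Hxq]]; [lra|].
        exists q; split; auto. apply in_app_iff in Hq; simpl in Hq.
        destruct Hq as [Hq|[Hq|Hq]]; try (apply in_app_iff; tauto).
        subst q; simpl in Hxq; lra. }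
    rewrite lsum_app in H1 |- *. simpl. pose proof (Rmax_r 0 (d - c)). simpl in H1. lra.
Qed.

Lemma lsum_seq (c d : nat -> R) N :
  lsum (map (fun n => (c n, d n)) (seq 0 (S N))) = sum_f_R0 (fun n => Rmax 0 (d n - c n)) N.
Proof.
  induction N.
  - simpl. lra.
  - rewrite seq_S, map_app, lsum_app, IHN. simpl. lra.
Qed.

Lemma list_bound (l : list R) : exists N, forall y, In y l -> forall n, y = INR n -> (n <= N)%nat.
Proof.
  induction l as [|y l [N1 HN1]].
  - exists 0%nat; intros y [].
  - destruct (classic (exists n, y = INR n)) as [[n0 Hn0]|Hno].
    + exists (Nat.max N1 n0). intros z [<-|Hz] n Hn.
      * subst. apply INR_eq in Hn. lia.
      * specialize (HN1 z Hz n Hn). lia.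
    + exists N1. intros z [<-|Hz] n Hn.
      * exfalso; apply Hno; eauto.
      * eauto.
Qed.

Lemma compact_cover (c d : nat -> R) u v :
  (forall x, u <= x <= v -> exists n, c n < x < d n) ->
  exists N, forall x, u <= x <= v -> exists n, (n <= N)%nat /\ c n < x < d n.
Proof.
  intros Hc.
  assert (Hcf : forall y, (exists x, (fun y x => exists n, y = INR n /\ c n < x < d n) y x) ->
              (fun y => exists n, y = INR n) y).
  { intros y [x [n [Hn _]]]; eauto. }
  set (F := mkfamily _ _ Hcf).
  destruct (compact_P3 u v F) as [D [Hcov [l Hl]]].
  - split.
    + intros x Hx. destruct (Hc x Hx) as [n Hn]. exists (INR n). simpl. eauto.
    + intros y x Hx. simpl in Hx. destruct Hx as [n [Hn Hxn]].
      assert (Hd : 0 < Rmin (x - c n) (d n - x)) by (apply Rmin_pos; lra).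
      exists (mkposreal _ Hd). intros z Hz. unfold disc in Hz; simpl in Hz.
      exists n. split; auto.
      pose proof (Rmin_l (x - c n) (d n - x)); pose proof (Rmin_r (x - c n) (d n - x)).
      apply Rabs_def2 in Hz. lra.
  - destruct (list_bound l) as [N HN]. exists N. intros x Hx.
    destruct (Hcov x Hx) as [y [[n [Hy Hxn]] HD]].
    exists n. split; auto. apply (HN y); auto. apply Hl. split; simpl; eauto.
Qed.

Lemma geom_le N : sum_f_R0 (fun i => (/2)^i) N <= 2.
Proof.
  rewrite tech3 by lra. pose proof (pow_lt (/2) (S N) ltac:(lra)).
  replace (1 - /2) with (/2) by lra. unfold Rdiv. rewrite Rinv_inv. lra.
Qed.

Lemma cover_len (a b : nat -> R) u v L :
  (forall n, a n <= b n) ->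
  (forall x, u <= x <= v -> exists n, a n <= x <= b n) ->
  (forall N, sum_f_R0 (fun n => b n - a n) N <= L) -> v - u <= L.
Proof.
  intros Hab Hc HL. destruct (Rle_dec (v - u) L) as [|Hlt]; auto. exfalso.
  set (eps := (v - u - L) / 2).
  assert (Heps : 0 < eps) by (unfold eps; lra).
  set (e := fun n => eps / 4 * (/2)^n).
  assert (He : forall n, 0 < e n).
  { intro n; unfold e. apply Rmult_lt_0_compat. lra. apply pow_lt; lra. }
  destruct (compact_cover (fun n => a n - e n) (fun n => b n + e n) u v) as [N HN].
  { intros x Hx. destruct (Hc x Hx) as [n Hn]. exists n. specialize (He n). lra. }
  pose proof (finite_cover (S N) (map (fun n => (a n - e n, b n + e n)) (seq 0 (S N)))
     ltac:(rewrite length_map, length_seq; lia) u v) as Hf.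
  rewrite lsum_seq in Hf.
  assert (Hsum : sum_f_R0 (fun n => Rmax 0 (b n + e n - (a n - e n))) N
         = sum_f_R0 (fun n => b n - a n) N + eps / 2 * sum_f_R0 (fun i => (/2)^i) N).
  { rewrite scal_sum, <- sum_plus. apply sum_eq. intros i _.
    rewrite Rmax_right. unfold e. lra. specialize (Hab i); specialize (He i); lra. }
  rewrite Hsum in Hf.
  assert (v - u <= L + eps).
  { eapply Rle_trans. apply Hf.
    - intros x Hx. destruct (HN x Hx) as [n [Hn Hxn]].
      exists (a n - e n, b n + e n). split; auto.
      apply in_map_iff. exists n. split; auto. apply in_seq. lia.
    - pose proof (HL N). pose proof (geom_le N).
      assert (eps / 2 * sum_f_R0 (fun i => (/ 2) ^ i) N <= eps / 2 * 2)
        by (apply Rmult_le_compat_l; lra). lra. }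
  unfold eps in H. lra.
Qed.

Lemma int_lb f a a' bb l (pr : Riemann_integrable f a bb) :
  a <= a' <= bb -> (forall x, a < x < bb -> 0 <= f x) ->
  (forall x, a' < x < bb -> l <= f x) -> l * (bb - a') <= RiemannInt pr.
Proof.
  intros Ha H0 Hl.
  pose (pr1 := RiemannInt_P22 pr Ha). pose (pr2 := RiemannInt_P23 pr Ha).
  rewrite <- (RiemannInt_P26 pr1 pr2 pr).
  assert (H1 : 0 <= RiemannInt pr1).
  { assert (H := RiemannInt_P19 (RiemannInt_P14 a a' 0) pr1 ltac:(lra)
       ltac:(intros x Hx; unfold fct_cte; apply H0; lra)).
    rewrite RiemannInt_P15 in H. lra. }
  assert (H2 : l * (bb - a') <= RiemannInt pr2).
  { rewrite <- (RiemannInt_P15 (RiemannInt_P14 a' bb l)).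
    apply RiemannInt_P19; [lra|]. intros x Hx. unfold fct_cte. apply Hl; lra. }
  lra.
Qed.

Lemma psum_le s l N : (forall n, 0 <= s n) -> infinite_sum s l -> sum_f_R0 s N <= l.
Proof.
  intros Hs Hl. apply (growing_ineq (fun n => sum_f_R0 s n)).
  - intro n. simpl. specialize (Hs (S n)). lra.
  - exact Hl.
Qed.

Lemma cover_weight (kappa : R -> R) (E : R -> Prop) r s S :
  (forall x, 0 < x < 1 -> 0 < kappa x < 1) ->
  (forall x y, 0 < x < 1 -> 0 < y < 1 -> x <= y -> kappa x <= kappa y) ->
  0 < r -> r <= s -> s < 1 ->
  (forall x, r <= x <= s -> E x) ->
  wcover_sum kappa (fun x => E x /\ r <= x) S ->
  (s - r) / kappa (1 - r) <= S.
Proof.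
  intros Hk Hmono Hr Hrs Hs Hall [a [bb [pr [Hab [Hcov Hsum]]]]].
  set (K := kappa (1 - r)).
  assert (HK : 0 < K < 1) by (apply Hk; lra).
  assert (HI0 : forall n, 0 <= RiemannInt (pr n)).
  { intro n. specialize (Hab n).
    pose proof (int_lb (wfun kappa) (a n) (bb n) (bb n) 0 (pr n) ltac:(lra)) as H.
    assert (0 * (bb n - bb n) <= RiemannInt (pr n)); [|lra].
    apply H.
    - intros x Hx. unfold wfun. left. apply Rinv_0_lt_compat. apply Hk; lra.
    - intros x Hx; lra. }
  assert (Hterm : forall n, Rmax r (bb n) - Rmax r (a n) <= K * RiemannInt (pr n)).
  { intro n. specialize (HI0 n). pose proof (Hab n) as Habn.
    destruct (Rle_dec (bb n) r).
    - rewrite (Rmax_left r (bb n)) by lra. rewrite (Rmax_left r (a n)) by lra.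
      pose proof (Rmult_le_pos K _ (Rlt_le _ _ (proj1 HK)) HI0). lra.
    - rewrite (Rmax_right r (bb n)) by lra.
      set (a' := Rmax r (a n)).
      assert (Ha' : a n <= a' <= bb n /\ r <= a').
      { unfold a', Rmax; destruct Rle_dec; lra. }
      pose proof (int_lb (wfun kappa) (a n) a' (bb n) (/K) (pr n) ltac:(lra)) as H.
      assert (H2 : / K * (bb n - a') <= RiemannInt (pr n)).
      { apply H.
        - intros x Hx. unfold wfun. left. apply Rinv_0_lt_compat. apply Hk; lra.
        - intros x Hx. unfold wfun. apply Rinv_le_contravar. apply Hk; lra.
          apply Hmono; lra. }
      apply (Rmult_le_compat_l K) in H2; [|lra].
      rewrite <- Rmult_assoc, Rinv_r in H2 by lra. lra. }
  assert (Hlen : s - r <= S * K).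
  { apply (cover_len (fun n => Rmax r (a n)) (fun n => Rmax r (bb n))).
    - intro n. specialize (Hab n). unfold Rmax; repeat destruct Rle_dec; lra.
    - intros x Hx. destruct (Hcov x) as [n Hn].
      + split; [apply Hall|]; lra.
      + lra.
      + exists n. unfold Rmax; repeat destruct Rle_dec; lra.
    - intro N. eapply Rle_trans.
      + apply sum_Rle. intros n _. apply Hterm.
      + rewrite (sum_eq _ (fun i => RiemannInt (pr i) * K)) by (intros; ring).
        rewrite <- scal_sum. rewrite Rmult_comm. apply Rmult_le_compat_r; [lra|].
        apply psum_le; auto. }
  apply (Rmult_le_reg_r K); [lra|]. unfold Rdiv. rewrite Rmult_assoc, Rinv_l by lra. lra.
Qed.

Lemma wcover_mono kappa (A B : R -> Prop) S :
  (forall x, A x -> B x) -> wcover_sum kappa B S -> wcover_sum kappa A S.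
Proof.
  intros HAB [a [bb [pr [H1 [H2 H3]]]]]. exists a, bb, pr. split; [exact H1|split; [|exact H3]].
  intros x Hx1 Hx2; apply H2; auto.
Qed.

Lemma wint_exists kappa A K0 :
  (exists S, wcover_sum kappa A S) ->
  (forall S, wcover_sum kappa A S -> K0 <= S) ->
  exists m, wint kappa A m /\ K0 <= m.
Proof.
  intros Hne Hlb.
  set (B := fun y => wcover_sum kappa A (- y)).
  destruct (completeness B) as [l [Hub Hl]].
  - exists (- K0). intros y Hy. specialize (Hlb _ Hy). lra.
  - destruct Hne as [S HS]. exists (- S). unfold B. rewrite Ropp_involutive. auto.
  - exists (- l). split; [split|].
    + intros S HS. assert (B (- S)) by (unfold B; rewrite Ropp_involutive; auto).
      specialize (Hub _ H). lra.
    + intros eps Heps. apply NNPP. intro Hno.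
      assert (l <= l - eps); [|lra].
      apply Hl. intros y Hy. apply Rnot_lt_le. intro Hlt. apply Hno.
      exists (- y). split; auto. lra.
    + assert (l <= - K0); [|lra]. apply Hl. intros y Hy. specialize (Hlb _ Hy). lra.
Qed.

Theorem lemma2 (kappa b : R -> R) (E : R -> Prop) (g h : R -> R)
  (Hkappa : admissible_kappa kappa)
  (HE : forall x, E x -> 0 <= x < 1)
  (Hmeas : lebesgue_measurable E)
  (Hint : wint_finite kappa E)
  (Hb : forall r, 0 < r < 1 -> 0 < b r < 1)
  (Hdens : density_lt_1 kappa b E)
  (Hg : forall x y, 0 < x < 1 -> 0 < y < 1 -> x <= y -> g x <= g y)
  (Hh : forall x y, 0 < x < 1 -> 0 < y < 1 -> x <= y -> h x <= h y)
  (Hgh : forall r, 0 < r < 1 -> ~ E r -> g r <= h r) :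
  exists R0, 0 <= R0 < 1 /\
    forall r, R0 <= r < 1 -> g r <= h (1 - b r * (1 - r)).
Proof.
  destruct Hkappa as [Hk Hcase].
  assert (Hmono : forall x y, 0 < x < 1 -> 0 < y < 1 -> x <= y -> kappa x <= kappa y).
  { intros x y Hx Hy Hxy. destruct Hcase as [Hid | [Hinc _]].
    - rewrite (Hid x Hx), (Hid y Hy); auto.
    - destruct (Req_dec x y) as [->|Hne]; [lra|]. left; apply Hinc; auto; lra. }
  destruct Hdens as [c [Hc1 [R1 [HR1 Hd]]]].
  exists (Rmax R1 (1/2)). split.
  { split. pose proof (Rmax_r R1 (1/2)); lra. unfold Rmax; destruct Rle_dec; lra. }
  intros r Hr. pose proof (Rmax_l R1 (1/2)). pose proof (Rmax_r R1 (1/2)).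
  assert (Hr0 : 0 < r) by lra.
  pose proof (Hb r ltac:(lra)) as Hbr.
  set (s := 1 - b r * (1 - r)).
  assert (Hrs : r < s /\ s < 1).
  { unfold s. assert (0 < b r * (1 - r)) by (apply Rmult_lt_0_compat; lra). split; nra. }
  destruct (classic (exists t, r <= t <= s /\ ~ E t)) as [[t [Ht HEt]]|Hno].
  - apply Rle_trans with (g t). apply Hg; lra.
    apply Rle_trans with (h t). apply Hgh; [lra|auto].
    apply Hh; lra.
  - exfalso.
    assert (Hall : forall x, r <= x <= s -> E x).
    { intros x Hx. apply NNPP. intro. apply Hno. eauto. }
    set (K := kappa (1 - r)).
    assert (HK : 0 < K < 1) by (apply Hk; lra).
    destruct (wint_exists kappa (fun x => E x /\ r <= x) ((s - r) / K)) as [m [Hm Hmge]].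
    + destruct Hint as [m0 [_ H2]]. destruct (H2 1 ltac:(lra)) as [S0 [HS0 _]].
      exists S0. eapply wcover_mono; [|exact HS0]. intros x [Hx _]; exact Hx.
    + intros S HS. apply (cover_weight kappa E r s S); auto; lra.
    + specialize (Hd r Hr0 ltac:(lra) m Hm). unfold density_ratio in Hd.
      fold K in Hd.
      assert (Hsr : s - r = (1 - b r) * (1 - r)) by (unfold s; ring).
      assert (HX : 1 - b r <= K / (1 - r) * m).
      { apply Rle_trans with (K / (1 - r) * ((s - r) / K)).
        - right. rewrite Hsr. field. lra.
        - apply Rmult_le_compat_l; auto. apply Rlt_le, Rdiv_lt_0_compat; lra. }
      assert (1 <= K / (1 - r) * m / (1 - b r)).
      { apply (Rmult_le_reg_r (1 - b r)); [lra|].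
        replace (K / (1 - r) * m / (1 - b r) * (1 - b r)) with (K / (1 - r) * m) by (field; lra).
        lra. }
      lra.
Qed.
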